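(* Suppose the matrix $A$ is diagonalisable with $2N$ distinct eigenvalues $\lambda_k^{(l)}$, $k=0,\dots,N-1$, $l=1,2$, and suppose $\gamma>0$ and $\gamma/2+\beta+T\alpha>1/T$. Then $\mathrm{Re}(\lambda_k^{(l)})\le0$ for all $k=0,\dots,N-1$ and $l=1,2$.
   Context: Parameters: $N>2$, $\alpha\ge0$, $\beta\ge0$, $\gamma>0$, $T>0$. $A\in\mathbb R^{2N\times 2N}$ is the drift matrix of the linear system in coordinates $(x_1,y_1,\dots,x_N,y_N)$ given, with cyclic indices ($x_{N+1}=x_1$, $y_{N+1}=y_1$, $x_0=x_N$), by $\dot x_n=y_n$, $\dot y_n=\gamma\big(\tfrac1T(x_{n+1}-x_n)-y_n\big)+\beta(y_{n+1}-y_n)+\alpha(x_{n+1}-2x_n+x_{n-1})$. *)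

(* Defs.v *)
From HB Require Import structures.
From mathcomp Require Import all_boot all_order all_algebra.
From mathcomp Require Import complex.
Set Implicit Arguments. Unset Strict Implicit. Unset Printing Implicit Defensive.
Import Order.TTheory GRing.Theory Num.Theory.
Local Open Scope ring_scope.

(* Drift matrix A in coordinates (x_1,y_1,...,x_N,y_N), 0-based:
   index 2n is x_{n+1}, index 2n+1 is y_{n+1}  (n = 0..N-1), cyclic mod N.
   Row of x_n :  dx_n = y_n.
   Row of y_n :  dy_n = gamma*((x_{n+1}-x_n)/T - y_n) + beta*(y_{n+1}-y_n)
                        + alpha*(x_{n+1} - 2 x_n + x_{n-1}). *)
Definition ind (b : bool) {R : pzRingType} : R := (b : nat)%:R.

Definition drift_mx (R : fieldType) (N : nat) (alpha beta gamma T : R)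
  : 'M[R]_(2 * N) :=
  \matrix_(i < 2 * N, j < 2 * N)
    let n := (i : nat)./2 in
    let xn := (2 * n)%N in
    let yn := (2 * n).+1 in
    let xs := (2 * (n.+1 %% N))%N in
    let ys := (2 * (n.+1 %% N)).+1 in
    let xp := (2 * ((n + N).-1 %% N))%N in
    if ~~ odd i then ind ((j : nat) == yn)
    else gamma * (T^-1 * (ind ((j : nat) == xs) - ind ((j : nat) == xn))
                  - ind ((j : nat) == yn))
         + beta * (ind ((j : nat) == ys) - ind ((j : nat) == yn))
         + alpha * (ind ((j : nat) == xs) - 2 * ind ((j : nat) == xn)
                    + ind ((j : nat) == xp)).

Definition complexify (R : rcfType) m n (M : 'M[R]_(m, n)) : 'M[R[i]]_(m, n) :=
  map_mx (fun x => (x%:C)%C) M.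

(* Main.v *)
Require Import Defs.
From HB Require Import structures.
From mathcomp Require Import all_boot all_order all_algebra.
From mathcomp Require Import complex ring lra zify.
Import Order.TTheory GRing.Theory Num.Theory.
Local Open Scope ring_scope.
Lemma key (R : rcfType) (al be ga t p q S Pr Pi : R) :
  0 <= al -> 0 <= be -> 0 < ga -> 0 < t ->
  ga * t + 2 * be * t + 2 * al > 2 * t ^+ 2 ->
  0 < S -> Pi ^+ 2 <= 2 * S * (S - Pr) ->
  (p^+2 - q^+2 + ga * p) * S + be * (p * (S - Pr) + q * Pi) + (ga * t + 2 * al) * (S - Pr) = 0 ->
  q * ((2 * p + ga) * S + be * (S - Pr)) - (be * p + ga * t) * Pi = 0 ->
  0 < p -> False.
Proof.
move=> ha hb hg ht hH hS hC hR hI hp.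
set s := S - Pr in hC hR hI.
have hs : 0 <= s by nra.
set D := be * p + ga * t.
set E := (2 * p + ga) * S + be * s.
have hD : 0 < D by rewrite /D; nra.
have hE : ga * S <= E by rewrite /E; nra.
have hE0 : 0 < E by nra.
set Rh := (p^+2 + ga * p) * S + be * p * s + (ga * t + 2 * al) * s.
have hRh : (p^+2 + ga * p) * S + (ga * t + 2 * al) * s <= Rh.
  rewrite /Rh; have := mulr_ge0 (mulr_ge0 hb (ltW hp)) hs; lra.
have hRh0 : 0 < (p^+2 + ga * p) * S.
  apply: mulr_gt0 => //; have := mulr_gt0 hg hp; nra.
have hvq : D * Pi = q * E by rewrite /D /E; lra.
have hq : q ^+ 2 * S - be * q * Pi = Rh by rewrite /Rh; lra.
set G := D * S - be * E.
have hqG : q ^+ 2 * G = D * Rh.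
  have e : q^+2 * G - D * (q^+2*S - be*q*Pi) = be * q * (D*Pi - q*E) by rewrite /G; ring.
  rewrite hvq subrr mulr0 hq in e.
  by apply/eqP; rewrite -subr_eq0 e.
have hG : 0 < G.
  have hgt : 0 <= ga * t + 2 * al by have := mulr_gt0 hg ht; lra.
  have hRp : 0 < Rh by have := mulr_ge0 hgt hs; lra.
  have h1 : 0 < D * Rh by apply: mulr_gt0.
  rewrite ltNge; apply/negP => hG.
  have : q^+2 * G <= 0 by apply: mulr_ge0_le0 (sqr_ge0 q) hG.
  lra.
have h3 : Pi ^+ 2 * D ^+ 2 * G = E ^+ 2 * D * Rh.
  have -> : Pi ^+ 2 * D ^+ 2 = (D * Pi) ^+ 2 by ring.
  rewrite hvq. have -> : E ^+ 2 * D * Rh = E ^+ 2 * (D * Rh) by ring.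
  rewrite -hqG; ring.
have h4 : E ^+ 2 * D * Rh <= 2 * S * s * D ^+ 2 * G.
  rewrite -h3. have hh : 0 <= D ^+ 2 * G by nra. nra.
have h5 : E ^+ 2 * Rh <= 2 * S * s * D * G.
  have : D * (E ^+ 2 * Rh) <= D * (2 * S * s * D * G) by nra.
  rewrite ler_pM2l //.
have h6 : D * G <= ga * t * (ga * t - be * ga) * S.
  have e : ga * t * (ga * t - be * ga) * S - D * G =
     ga * t * (be^+2 * s) + be * p * (be * ga * S + be^+2 * s) + be^+2 * (p^+2 * S)
    by rewrite /G /E /D /s; ring.
  have hb2 : 0 <= be^+2 by apply: sqr_ge0.
  have hp2 : 0 <= p^+2 by apply: sqr_ge0.
  have k1 : 0 <= ga * t * (be^+2 * s) by apply: mulr_ge0; [apply: mulr_ge0; lra | apply: mulr_ge0].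
  have k2 : 0 <= be * p * (be * ga * S + be^+2 * s).
    apply: mulr_ge0; first by apply: mulr_ge0; lra.
    apply: addr_ge0; last by apply: mulr_ge0.
    apply: mulr_ge0; [apply: mulr_ge0|]; lra.
  have k3 : 0 <= be^+2 * (p^+2 * S) by apply: mulr_ge0 => //; apply: mulr_ge0 => //; lra.
  lra.
have h7 : ga ^+ 2 * S ^+ 2 * ((p^+2 + ga * p) * S + (ga * t + 2 * al) * s) <= E ^+ 2 * Rh.
  have gS : 0 <= ga * S by apply: mulr_ge0; lra.
  have e2 : ga ^+ 2 * S ^+ 2 <= E ^+ 2.
    have := ler_pM gS gS hE hE. have -> : ga ^+ 2 * S ^+ 2 = ga * S * (ga * S) by ring.
    by rewrite expr2.
  have hgt : 0 <= ga * t + 2 * al by have := mulr_gt0 hg ht; lra.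
  have X0 : 0 <= (p^+2 + ga * p) * S + (ga * t + 2 * al) * s.
    have := mulr_ge0 hgt hs; lra.
  apply: ler_pM => //; apply: mulr_ge0; apply: sqr_ge0.
have h8 : 2 * S * s * (ga * t * (ga * t - be * ga) * S) <= ga ^+ 2 * S ^+ 2 * ((ga * t + 2 * al) * s).
  have h : 2 * t * (t - be) <= ga * t + 2 * al.
    have -> : 2 * t * (t - be) = 2 * t^+2 - 2 * be * t by ring. lra.
  have k : 0 <= ga ^+ 2 * S ^+ 2 * s by apply: mulr_ge0 => //; apply: mulr_ge0; apply: sqr_ge0.
  have := ler_wpM2l k h.
  have -> : 2 * S * s * (ga * t * (ga * t - be * ga) * S) = ga ^+ 2 * S ^+ 2 * s * (2 * t * (t - be)) by ring.
  have -> : ga ^+ 2 * S ^+ 2 * ((ga * t + 2 * al) * s) = ga ^+ 2 * S ^+ 2 * s * (ga * t + 2 * al) by ring.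
  done.
have h9 : 0 < ga ^+ 2 * S ^+ 2 * ((p^+2 + ga * p) * S).
  by apply: mulr_gt0 => //; apply: mulr_gt0; apply: exprn_gt0.
have h10 : 2 * S * s * (D * G) <= 2 * S * s * (ga * t * (ga * t - be * ga) * S).
  apply: ler_wpM2l => //; apply: mulr_ge0 => //; apply: mulr_ge0 => //; lra.
have e5 : 2 * S * s * D * G = 2 * S * s * (D * G) by ring.
rewrite e5 in h5.
have e7 : ga ^+ 2 * S ^+ 2 * ((p ^+ 2 + ga * p) * S + (ga * t + 2 * al) * s) =
  ga ^+ 2 * S ^+ 2 * ((p ^+ 2 + ga * p) * S) + ga ^+ 2 * S ^+ 2 * ((ga * t + 2 * al) * s) by ring.
rewrite e7 in h7.
lra.
Qed.

Lemma col_eig (F : fieldType) n (A : 'M[F]_n) l :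
  eigenvalue A l -> exists2 u : 'cV_n, u != 0 & A *m u = l *: u.
Proof.
move/eigenvalueP => [v vA vnz].
have hd : \det (l%:M - A) == 0.
  apply/det0P; exists v => //.
  by rewrite mulmxBr vA mul_mx_scalar subrr.
rewrite -det_tr in hd.
move/det0P: hd => [w wnz wM].
exists w^T; first by rewrite trmx_eq0.
apply/eqP; rewrite -subr_eq0 -[l *: w^T]mul_scalar_mx -mulmxBl.
rewrite -oppr_eq0 -mulNmx opprB.
have := congr1 trmx wM; rewrite trmx_mul trmxK => ->.
by rewrite trmx0.
Qed.

Definition ext (F : pzRingType) m (u : 'I_m -> F) (k : nat) : F :=
  oapp u 0 (insub k : option 'I_m).

Arguments ext {F m} u k.

Lemma ext_ord (F : pzRingType) m (u : 'I_m -> F) (j : 'I_m) : ext u j = u j.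
Proof. by rewrite /ext valK. Qed.

Lemma sum_ind (F : pzRingType) m (u : 'I_m -> F) (k : nat) :
  \sum_(j < m) ind ((j : nat) == k) * u j = ext u k.
Proof.
case: (ltnP k m) => hk.
  rewrite (bigD1 (Ordinal hk)) //= eqxx big1 ?addr0.
    by rewrite /ext insubT /= /ind mul1r.
  move=> j hj; have -> : ((j : nat) == k) = false.
    by apply/negbTE; apply: contra hj => /eqP hjk; apply/eqP/val_inj.
  by rewrite /ind mul0r.
rewrite /ext insubF /=; last by apply/negbTE; rewrite -leqNgt.
apply: big1 => j _; have -> : ((j : nat) == k) = false.
  by apply/negbTE; apply/eqP => e; move: (ltn_ord j); rewrite e; lia.
by rewrite /ind mul0r.
Qed.

Section Drift.
Variables (R : rcfType) (N : nat) (al be ga T : R).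
Local Notation D := (drift_mx N al be ga T).

Lemma drift_even (i j : 'I_(2 * N)) : ~~ odd i ->
  D i j = ind ((j : nat) == (2 * (i./2)).+1).
Proof. by move=> h; rewrite mxE /= h. Qed.

Lemma drift_odd (i j : 'I_(2 * N)) : odd i ->
  D i j = (ga * T^-1 + al) * ind ((j : nat) == (2 * ((i./2).+1 %% N))%N)
        + (- (ga * T^-1) - 2 * al) * ind ((j : nat) == (2 * (i./2))%N)
        + (- ga - be) * ind ((j : nat) == (2 * (i./2)).+1)
        + be * ind ((j : nat) == (2 * ((i./2).+1 %% N)).+1)
        + al * ind ((j : nat) == (2 * ((i./2 + N).-1 %% N))%N).
Proof. by move=> h; rewrite mxE /= h /=; ring. Qed.

Lemma indC (b : bool) : (ind b : R)%:C%C = ind b.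
Proof. by rewrite /ind rmorph_nat. Qed.

Variable u : 'cV[R[i]]_(2 * N).
Local Notation U := (ext (fun j => u j ord0)).

Lemma row_even (i : 'I_(2 * N)) : ~~ odd i ->
  (complexify D *m u) i ord0 = U (2 * (i./2)).+1.
Proof.
move=> h; rewrite mxE -sum_ind; apply: eq_bigr => j _.
by rewrite mxE drift_even // indC.
Qed.

Lemma row_odd (i : 'I_(2 * N)) : odd i ->
  (complexify D *m u) i ord0 =
          (ga * T^-1 + al)%:C%C * U (2 * ((i./2).+1 %% N))%N
        + (- (ga * T^-1) - 2 * al)%:C%C * U (2 * (i./2))%N
        + (- ga - be)%:C%C * U (2 * (i./2)).+1
        + be%:C%C * U (2 * ((i./2).+1 %% N)).+1
        + al%:C%C * U (2 * ((i./2 + N).-1 %% N))%N.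
Proof.
move=> h; rewrite -!sum_ind !mulr_sumr -!big_split mxE; apply: eq_bigr => j _.
rewrite mxE drift_odd // /ind.
rewrite !(rmorphD, rmorphM, rmorphN, rmorphB, rmorph_nat) /=; ring.
Qed.
End Drift.
Section S.
Variable R : rcfType.
Lemma ReM (x y : R[i]) : complex.Re (x*y) = complex.Re x * complex.Re y - complex.Im x * complex.Im y.
Proof. by case: x => ??; case: y. Qed.
Lemma ImM (x y : R[i]) : complex.Im (x*y) = complex.Re x * complex.Im y + complex.Im x * complex.Re y.
Proof. by case: x => ??; case: y. Qed.
Lemma ReD (x y : R[i]) : complex.Re (x+y) = complex.Re x + complex.Re y.
Proof. by case: x => ??; case: y. Qed.
Lemma ImD (x y : R[i]) : complex.Im (x+y) = complex.Im x + complex.Im y.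
Proof. by case: x => ??; case: y. Qed.
Lemma ReC (c : R) : complex.Re (c%:C)%C = c. Proof. by []. Qed.
Lemma ImC (c : R) : complex.Im (c%:C)%C = 0. Proof. by []. Qed.
Lemma half2 n : (2 * n)./2 = n.
Proof. by rewrite mul2n doubleK. Qed.
Lemma uphalf2 n : uphalf (2 * n) = n.
Proof. by rewrite mul2n uphalf_double. Qed.
Lemma half2S n : (2 * n).+1./2 = n.
Proof. by rewrite mul2n /= uphalf_double. Qed.
End S.
Section S2.
Variable R : rcfType.
Local Notation Re := (@complex.Re R).
Local Notation Im := (@complex.Im R).
Lemma ReB (x y : R[i]) : Re (x-y) = Re x - Re y.
Proof. by case: x => ??; case: y. Qed.
Lemma ImB (x y : R[i]) : Im (x-y) = Im x - Im y.
Proof. by case: x => ??; case: y. Qed.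
Lemma ReJ (x : R[i]) : Re (x^*)%C = Re x. Proof. by case: x. Qed.
Lemma ImJ (x : R[i]) : Im (x^*)%C = - Im x. Proof. by case: x. Qed.
Lemma Re0 : Re 0 = 0. Proof. by []. Qed.
Lemma Im0 : Im 0 = 0. Proof. by []. Qed.

Lemma comb (l X Xs Xp : R[i]) (c1 c2 c3 c4 c5 : R) :
  l * (l * X) = c1%:C%C * Xs + c2%:C%C * X + c3%:C%C * (l * X) + c4%:C%C * (l * Xs) + c5%:C%C * Xp ->
  (Re l ^+ 2 - Im l ^+ 2 - c2 - c3 * Re l) * (Re X ^+ 2 + Im X ^+ 2)
   + (- c1 - c4 * Re l) * (Re Xs * Re X + Im Xs * Im X)
   + (c4 * Im l) * (Im Xs * Re X - Re Xs * Im X)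
   + (- c5) * (Re Xp * Re X + Im Xp * Im X) = 0 /\
  (2 * Re l * Im l - c3 * Im l) * (Re X ^+ 2 + Im X ^+ 2)
   + (- c1 - c4 * Re l) * (Im Xs * Re X - Re Xs * Im X)
   + (- c4 * Im l) * (Re Xs * Re X + Im Xs * Im X)
   + (- c5) * (Im Xp * Re X - Re Xp * Im X) = 0.
Proof.
move=> e.
have e0 : (l * (l * X) - (c1%:C%C * Xs + c2%:C%C * X + c3%:C%C * (l * X) + c4%:C%C * (l * Xs) + c5%:C%C * Xp)) * (X^*)%C = 0.
  by rewrite e subrr mul0r.
have h1 := congr1 Re e0; have h2 := congr1 Im e0.
rewrite !(ReM, ImM, ReB, ImB, ReD, ImD, ReC, ImC, ReJ, ImJ, Re0, Im0) in h1 h2.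
split; lra.
Qed.
End S2.

Lemma sum_lin4 (R : rcfType) (I : finType) (k1 k2 k3 k4 : R) (f1 f2 f3 f4 : I -> R) :
  \sum_i (k1 * f1 i + k2 * f2 i + k3 * f3 i + k4 * f4 i) =
  k1 * \sum_i f1 i + k2 * \sum_i f2 i + k3 * \sum_i f3 i + k4 * \sum_i f4 i.
Proof. by rewrite !big_split /= -!mulr_sumr. Qed.

Lemma sum_lin5 (R : rcfType) (I : finType) (k1 k2 k3 k4 k5 : R) (f1 f2 f3 f4 f5 : I -> R) :
  \sum_i (k1 * f1 i + k2 * f2 i + k3 * f3 i + k4 * f4 i + k5 * f5 i) =
  k1 * \sum_i f1 i + k2 * \sum_i f2 i + k3 * \sum_i f3 i + k4 * \sum_i f4 i + k5 * \sum_i f5 i.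
Proof. by rewrite !big_split /= -!mulr_sumr. Qed.

Lemma sum_shift (R : rcfType) N (F : 'I_N -> 'I_N -> R) :
  \sum_n F (ord_pred n) n = \sum_n F n (ordS n).
Proof.
rewrite (reindex_inj (@ordS_inj N)); apply: eq_bigr => n _; by rewrite ordSK.
Qed.

Lemma sum_shift1 (R : rcfType) N (F : 'I_N -> R) :
  \sum_n F (ordS n) = \sum_n F n.
Proof. by rewrite [RHS](reindex_inj (@ordS_inj N)). Qed.

Lemma normpos (R : rcfType) (z : R[i]) : z != 0 -> 0 < complex.Re z ^+ 2 + complex.Im z ^+ 2.
Proof.
case: z => a b /= hz; rewrite lt_def addr_ge0 ?sqr_ge0 // andbT.
apply: contra hz; rewrite paddr_eq0 ?sqr_ge0 // !sqrf_eq0 => /andP[/eqP-> /eqP->].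
by [].
Qed.

Lemma bridgeR (R : rcfType) (al be ga t p q S Pr Pi : R) :
  (p ^+ 2 - q ^+ 2 - (- (ga * t) - 2 * al) - (- ga - be) * p) * S
   + (- (ga * t + al) - be * p) * Pr + (be * q) * Pi + (- al) * Pr = 0 ->
  (p^+2 - q^+2 + ga * p) * S + be * (p * (S - Pr) + q * Pi) + (ga * t + 2 * al) * (S - Pr) = 0.
Proof. move=> e; rewrite -[RHS]e; ring. Qed.
Lemma bridgeI (R : rcfType) (al be ga t p q S Pr Pi : R) :
  (2 * p * q - (- ga - be) * q) * S
   + (- (ga * t + al) - be * p) * Pi + (- be * q) * Pr + (- al) * (- Pi) = 0 ->
  q * ((2 * p + ga) * S + be * (S - Pr)) - (be * p + ga * t) * Pi = 0.
Proof. move=> e; rewrite -[RHS]e; ring. Qed.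

Arguments col_eig {F n A l}.
Arguments bridgeR {R al be ga t p q S Pr Pi}.
Arguments bridgeI {R al be ga t p q S Pr Pi}.
Arguments key {R al be ga t p q S Pr Pi}.
Arguments comb {R l X Xs Xp c1 c2 c3 c4 c5}.
Arguments normpos {R z}.
Arguments sum_shift {R N} F.
Arguments sum_shift1 {R N} F.

Theorem theorem3p2 (R : rcfType) (N : nat) (alpha beta gamma T : R) :
  (2 < N)%N -> 0 <= alpha -> 0 <= beta -> 0 < gamma -> 0 < T ->
  let A := complexify (drift_mx N alpha beta gamma T) in
  diagonalizable A ->
  (exists s : seq R[i],
      [/\ size s = (2 * N)%N, uniq s & forall l, l \in s -> eigenvalue A l]) ->
  gamma / 2 + beta + T * alpha > T^-1 ->
  forall l : R[i], eigenvalue A l -> complex.Re l <= 0.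
Proof.
move=> hN ha hb hg hT A _ _ hH l hl.
rewrite leNgt; apply/negP => hp.
have [u unz Au] := col_eig hl.
rewrite /A in Au.
pose X := fun n : 'I_N => ext (u^~ ord0) (2 * n)%N.
have hY : forall n : 'I_N, ext (u^~ ord0) (2 * n).+1 = l * X n.
  move=> n; have hi : (2 * n < 2 * N)%N by have := ltn_ord n; lia.
  have := congr1 (fun M : 'M[R[i]]_(2 * N, 1) => M (Ordinal hi) ord0) Au.
  rewrite row_even /=; last by rewrite oddM.
  rewrite half2 mxE /X => ->.
  by rewrite -[(2 * n)%N]/(nat_of_ord (Ordinal hi)) ext_ord.
have hE : forall n : 'I_N, l * (l * X n) =
    (gamma * T^-1 + alpha)%:C%C * X (ordS n) + (- (gamma * T^-1) - 2 * alpha)%:C%C * X n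
    + (- gamma - beta)%:C%C * (l * X n) + beta%:C%C * (l * X (ordS n))
    + alpha%:C%C * X (ord_pred n).
  move=> n; have hi : ((2 * n).+1 < 2 * N)%N by have := ltn_ord n; lia.
  have := congr1 (fun M : 'M[R[i]]_(2 * N, 1) => M (Ordinal hi) ord0) Au.
  rewrite row_odd /=; last by rewrite oddM.
  rewrite uphalf2 mxE.
  have e1 : u (Ordinal hi) ord0 = ext (u^~ ord0) (2 * n).+1.
    by rewrite -[((2 * n).+1)%N]/(nat_of_ord (Ordinal hi)) ext_ord.
  have e2 : ext (u^~ ord0) (2 * (n.+1 %% N)).+1 = l * X (ordS n) := hY (ordS n).
  rewrite e1 e2 hY => e.
  exact: (esym e).
pose a := fun n => complex.Re (X n).
pose b := fun n => complex.Im (X n).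
pose p := complex.Re l. pose q := complex.Im l.
have [S hS] : exists S, S = \sum_n (a n ^+ 2 + b n ^+ 2) by eexists.
have [Pr hPr] : exists S, S = \sum_n (a (ordS n) * a n + b (ordS n) * b n) by eexists.
have [Pi hPi] : exists S, S = \sum_n (b (ordS n) * a n - a (ordS n) * b n) by eexists.
have hRpp : \sum_n (a (ord_pred n) * a n + b (ord_pred n) * b n) = Pr.
  rewrite (sum_shift (fun m n => a m * a n + b m * b n)) hPr.
  by apply: eq_bigr => n _; ring.
have hMpp : \sum_n (b (ord_pred n) * a n - a (ord_pred n) * b n) = - Pi.
  rewrite (sum_shift (fun m n => b m * a n - a m * b n)) hPi -sumrN.
  by apply: eq_bigr => n _; ring.
have sumR : (p ^+ 2 - q ^+ 2 - (- (gamma * T^-1) - 2 * alpha) - (- gamma - beta) * p) * \sum_n (a n ^+ 2 + b n ^+ 2)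
   + (- (gamma * T^-1 + alpha) - beta * p) * \sum_n (a (ordS n) * a n + b (ordS n) * b n)
   + (beta * q) * \sum_n (b (ordS n) * a n - a (ordS n) * b n)
   + (- alpha) * \sum_n (a (ord_pred n) * a n + b (ord_pred n) * b n) = 0.
  rewrite -sum_lin4 big1 // => n _.
  exact: (comb (hE n)).1.
rewrite hRpp -hS -hPr -hPi in sumR.
have sumI : (2 * p * q - (- gamma - beta) * q) * \sum_n (a n ^+ 2 + b n ^+ 2)
   + (- (gamma * T^-1 + alpha) - beta * p) * \sum_n (b (ordS n) * a n - a (ordS n) * b n)
   + (- beta * q) * \sum_n (a (ordS n) * a n + b (ordS n) * b n)
   + (- alpha) * \sum_n (b (ord_pred n) * a n - a (ord_pred n) * b n) = 0.
  rewrite -sum_lin4 big1 // => n _.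
  exact: (comb (hE n)).2.
rewrite hMpp -hS -hPr -hPi in sumI.
have hSpos : 0 < S.
  have [j hj] : exists j, u j ord0 != 0.
    apply/existsP; apply: contraNT unz => /existsPn hj; apply/eqP/matrixP => i k.
    by rewrite (ord1 k) mxE; apply/eqP/negPn/hj.
  have hn : (j./2 < N)%N by have := ltn_ord j; lia.
  pose n := Ordinal hn.
  have ej : (j : nat) = (2 * n + odd j)%N by rewrite /=; have := odd_double_half j; rewrite -mul2n; lia.
  have hX : X n != 0.
    have := @ext_ord _ _ (u^~ ord0) j; rewrite ej.
    case: (odd j) => /=; rewrite ?addn0 ?addn1.
      rewrite (hY n) => e; apply/negP => /eqP hx; move/negP: hj; apply.
      by rewrite -e hx mulr0.
    move=> e; apply/negP => /eqP hx; move/negP: hj; apply.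
    by rewrite -e; apply/eqP; exact: hx.
  have := normpos hX.
  rewrite hS (bigD1 n) //=.
  have : 0 <= \sum_(i | i != n) (a i ^+ 2 + b i ^+ 2).
    by apply: sumr_ge0 => i _; apply: addr_ge0; apply: sqr_ge0.
  rewrite /a /b; lra.
(* Cauchy-Schwarz *)
have hCS : Pi ^+ 2 <= 2 * S * (S - Pr).
  have h0 : 0 <= \sum_n ((S * (b (ordS n) - b n) - Pi * a n) ^+ 2
                        + (S * (a (ordS n) - a n) + Pi * b n) ^+ 2).
    by apply: sumr_ge0 => n _; apply: addr_ge0; apply: sqr_ge0.
  have e : \sum_n ((S * (b (ordS n) - b n) - Pi * a n) ^+ 2
                        + (S * (a (ordS n) - a n) + Pi * b n) ^+ 2)
    = S ^+ 2 * \sum_n (a (ordS n) ^+ 2 + b (ordS n) ^+ 2)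
      + (S ^+ 2 + Pi ^+ 2) * \sum_n (a n ^+ 2 + b n ^+ 2)
      + (- 2 * S ^+ 2) * \sum_n (a (ordS n) * a n + b (ordS n) * b n)
      + (- 2 * S * Pi) * \sum_n (b (ordS n) * a n - a (ordS n) * b n).
    rewrite -sum_lin4; apply: eq_bigr => n _; ring.
  rewrite e (sum_shift1 (fun n => a n ^+ 2 + b n ^+ 2)) -hS -hPr -hPi in h0.
  have h1 : 0 <= S * (2 * S * (S - Pr) - Pi ^+ 2).
    have -> : S * (2 * S * (S - Pr) - Pi ^+ 2) =
      S ^+ 2 * S + (S ^+ 2 + Pi ^+ 2) * S + - 2 * S ^+ 2 * Pr + - 2 * S * Pi * Pi by ring.
    done.
  rewrite pmulr_rge0 // subr_ge0 in h1.
  done.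
have htp : 0 < T^-1 by rewrite invr_gt0.
have hH' : gamma * T^-1 + 2 * beta * T^-1 + 2 * alpha > 2 * T^-1 ^+ 2.
  have hTT : T * T^-1 = 1 by rewrite mulfV // gt_eqF.
  have h2 : T^-1 * (2 * T^-1) < (gamma / 2 + beta + T * alpha) * (2 * T^-1).
    by rewrite ltr_pM2r // mulr_gt0.
  have e1 : (gamma / 2 + beta + T * alpha) * (2 * T^-1)
     = gamma * T^-1 + 2 * beta * T^-1 + 2 * alpha * (T * T^-1).
    have h22 : (2 : R)^-1 * 2 = 1 by rewrite mulVf // pnatr_eq0.
    by field; rewrite gt_eqF.
  rewrite e1 hTT mulr1 in h2.
  have e2 : T^-1 * (2 * T^-1) = 2 * T^-1 ^+ 2 by ring.
  by rewrite e2 in h2.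
apply: (key ha hb hg htp hH' hSpos hCS _ _ hp).
- exact: (bridgeR sumR).
- exact: (bridgeI sumI).
Qed.
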